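(* $D(19,\{3,4\})\ge 33$; equivalently, every $\{K_3,K_4\}$-decomposition of $K_{19}$ has $\alpha\ge 9$.
   Context: A $\{K_3,K_4\}$-decomposition of $K_v$ is a collection of subgraphs, each isomorphic to $K_3$ or $K_4$, such that every edge of $K_v$ lies in exactly one of them. $\alpha$ and $\beta$ denote the numbers of copies of $K_3$ and $K_4$ in the decomposition (so $3\alpha+6\beta=\binom{v}{2}$). $D(v,\{3,4\})$ is the minimum of $\alpha+\beta$ over all such decompositions of $K_v$. *)

(* Defs.v *)
From mathcomp Require Import all_boot.
Set Implicit Arguments. Unset Strict Implicit. Unset Printing Implicit Defensive.

(* Each block (copy of K3 or
   K4, a complete subgraph) is given by its vertex set, of size 3 or 4.
   The list may a priori repeat blocks; every edge {x,y} of K_v must lie in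
   exactly one block of the list (counted with multiplicity). *)
Definition is_K34_decomp (v : nat) (s : seq {set 'I_v}) : Prop :=
  (forall B, B \in s -> (#|B| == 3) || (#|B| == 4)) /\
  (forall x y : 'I_v, x != y -> count (fun B : {set 'I_v} => (x \in B) && (y \in B)) s = 1).

Definition alpha (v : nat) (s : seq {set 'I_v}) : nat := count (fun B : {set 'I_v} => #|B| == 3) s.
Definition beta (v : nat) (s : seq {set 'I_v}) : nat := count (fun B : {set 'I_v} => #|B| == 4) s.

(* Main.v *)
Require Import Defs.
From mathcomp Require Import all_boot zify.

Lemma countE (T : Type) (a : pred T) (s : seq T) :
  count a s = \sum_(B <- s) nat_of_bool (a B).
Proof. by elim: s => [|y s IH]; rewrite ?big_nil ?big_cons //= IH. Qed.

Lemma sum_in_card (v : nat) (A B : {set 'I_v}) :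
  \sum_(y in A) nat_of_bool (y \in B) = #|A :&: B|.
Proof.
rewrite -sum1_card big_mkcond [RHS]big_mkcond; apply: eq_bigr => y _.
by rewrite in_setI; case: (y \in A); case: (y \in B).
Qed.

Lemma lemK (v : nat) (s : seq {set 'I_v}) x (A : {set 'I_v}) :
  is_K34_decomp s ->
  #|A :\ x| = \sum_(B <- s) (x \in B) * #|B :&: (A :\ x)|.
Proof.
move=> [_ H].
rewrite -sum1_card.
rewrite (eq_bigr (fun y => \sum_(B <- s) nat_of_bool ((x \in B) && (y \in B)))); last first.
  move=> y; rewrite in_setD1 => /andP[yx _]; rewrite -countE H //.
  by rewrite eq_sym.
rewrite exchange_big /=; apply: eq_bigr => B _.
case: (x \in B); last by rewrite mul0n big1.
by rewrite mul1n sum_in_card setIC.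
Qed.

Lemma lemL (v : nat) (s : seq {set 'I_v}) (P : pred {set 'I_v}) (A : {set 'I_v}) :
  \sum_(x in A) count (fun B : {set 'I_v} => (x \in B) && P B) s = \sum_(B <- s) P B * #|B :&: A|.
Proof.
rewrite (eq_bigr (fun x => \sum_(B <- s) nat_of_bool ((x \in B) && P B))); last first.
  by move=> y _; rewrite countE.
rewrite exchange_big /=; apply: eq_bigr => B _.
case: (P B); last by rewrite mul0n big1 // => i _; rewrite andbF.
rewrite mul1n setIC -sum_in_card.
by apply: eq_bigr => i _; rewrite andbT.
Qed.

Theorem mainTheorem19 (s : seq {set 'I_19}) :
  is_K34_decomp s -> 33 <= alpha s + beta s.
Proof.
move=> D; have [Hsz Hcnt] := D.
pose tx x := count (fun B : {set 'I_19} => (x \in B) && (#|B| == 3)) s.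
pose bx x := count (fun B : {set 'I_19} => (x \in B) && (#|B| == 4)) s.
have S1 : forall x, 2 * tx x + 3 * bx x = 18.
  move=> x; have := @lemK 19 s x [set: 'I_19] D.
  have -> : #|[set: 'I_19] :\ x| = 18.
    by have := cardsD1 x [set: 'I_19]; rewrite cardsT in_setT /= => H; rewrite card_ord in H; lia.
  move=> ->; rewrite /tx /bx !countE !big_distrr -big_split /=.
  rewrite big_seq [RHS]big_seq; apply: eq_bigr => B /Hsz HB.
  have -> : #|B :&: ([set: 'I_19] :\ x)| = #|B :\ x|.
    by apply: eq_card => y; rewrite !inE andbT andbC.
  have := cardsD1 x B.
  case: (x \in B) => /=; last by rewrite !muln0.
  case/orP: HB => /eqP ->; lia.
have St : \sum_(x in [set: 'I_19]) tx x = 3 * alpha s.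
  rewrite lemL /alpha countE big_distrr /=; apply: eq_bigr => B _.
  by rewrite setIT; case: eqP => [->|] //=; rewrite muln1.
have Sb : \sum_(x in [set: 'I_19]) bx x = 4 * beta s.
  rewrite lemL /beta countE big_distrr /=; apply: eq_bigr => B _.
  by rewrite setIT; case: eqP => [->|] //=; rewrite muln1.
have Etot : alpha s + 2 * beta s = 57.
  have : \sum_(x in [set: 'I_19]) (2 * tx x + 3 * bx x) = 342.
    by rewrite (eq_bigr (fun _ => 18)) // sum_nat_const cardsT card_ord.
  rewrite big_split /= -!big_distrr /= St Sb; lia.
rewrite leqNgt; apply/negP => Hlt.
have Ha : 0 < alpha s by lia.
move: (Ha); rewrite /alpha -has_count => /hasP [B0 B0s /eqP B0c].
have [x0 x0B0] : exists x, x \in B0.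
  by apply/set0Pn; rewrite -card_gt0 B0c.
pose W := [set y | 0 < tx y].
have inW : forall B y, B \in s -> #|B| == 3 -> y \in B -> y \in W.
  move=> B y Bs B3 yB; rewrite inE /tx -has_count; apply/hasP; exists B => //.
  by rewrite yB B3.
have Hlb : forall x, x \in W ->
   2 * tx x + \sum_(B <- s) ((x \in B) && (#|B|==4)) * #|B :&: (W :\ x)| <= #|W :\ x|.
  move=> x xW; rewrite (@lemK 19 s x W D) /tx countE big_distrr -big_split /=.
  rewrite big_seq [X in _ <= X]big_seq; apply: leq_sum => B Bs; have HB := Hsz B Bs.
  case xB: (x \in B) => //=.
  case/orP: (HB) => /eqP B3; rewrite B3 /=.
    rewrite mul0n addn0 mul1n.
    have := cardsD1 x B; rewrite xB B3 => H3.
    have : #|B :\ x| <= #|B :&: (W :\ x)|.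
      apply: subset_leq_card; apply/subsetP => y; rewrite !inE => /andP[yx yB].
      rewrite yB yx /=; have := inW B y Bs; rewrite inE B3; apply => //.
    have H2 : #|B :\ x| = 2 by lia.
    by rewrite H2 muln1.
  by rewrite muln0 add0n.
have t3 : forall x, x \in W -> 3 <= tx x.
  by move=> x; rewrite inE => H; have := S1 x; lia.
have x0W : x0 \in W by apply: (inW B0) => //; rewrite B0c.
have W7 : 7 <= #|W|.
  have := Hlb x0 x0W; have := t3 x0 x0W; have := cardsD1 x0 W; rewrite x0W; lia.
have SW1 : 3 * #|W| <= \sum_(x in W) tx x.
  by rewrite mulnC -sum_nat_const; apply: leq_sum => x /t3.
have SW2 : \sum_(x in W) tx x <= \sum_(x in [set: 'I_19]) tx x.
  rewrite big_mkcond [X in _ <= X]big_mkcond; apply: leq_sum => x _.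
  by rewrite in_setT; case: (x \in W).
have Wc : #|W| = 7 by lia.
have SWt : \sum_(x in W) tx x = 21 by lia.
have SWb : \sum_(x in W) bx x = 28.
  have : \sum_(x in W) (2 * tx x + 3 * bx x) = 126.
    by rewrite (eq_bigr (fun _ => 18)) // sum_nat_const Wc.
  rewrite big_split /= -!big_distrr /= SWt; lia.
have K4W : forall B, B \in s -> #|B| == 4 -> #|B :&: W| <= 1.
  move=> B Bs B4; rewrite leqNgt; apply/negP => H2.
  have [x xBW] : exists x, x \in B :&: W by apply/set0Pn; rewrite -card_gt0; lia.
  have H1 : 1 <= #|B :&: (W :\ x)|.
    have -> : #|B :&: (W :\ x)| = #|(B :&: W) :\ x|.
      by apply: eq_card => y; rewrite !inE; case: (y \in B); case: (y != x).
    have := cardsD1 x (B :&: W); rewrite xBW; lia.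
  move: xBW; rewrite in_setI => /andP[xB xW].
  have := Hlb x xW; rewrite (big_rem B Bs) /= xB B4 /= mul1n.
  have := t3 x xW; have := cardsD1 x W; rewrite xW Wc add1n.
  move=> HW Ht; move: HW H1; set c := #|B :&: (W :\ x)|; set S := \sum_(y <- _) _; set d := #|W :\ x|; move: (tx x) Ht => t Ht. clearbody c S d. lia.
have : \sum_(x in W) bx x <= beta s.
  rewrite lemL /beta countE big_seq [X in _ <= X]big_seq; apply: leq_sum => B Bs.
  by case B4: (#|B| == 4) => //=; rewrite mul1n; apply: K4W.
lia.
Qed.
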